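(* Let $a>0$ and $n,k$ be integers with $1\le k\le n/2$, and let $a_0,\dots,a_n$ be integers. Say a prime $p$ satisfies (C) if $p\mid\prod_{i=1}^k(a+n-k+i)$ and $p\nmid a_0a_n$. (i) If there is a prime $p>a+k$ satisfying (C), then $f_{n,a}(x)$ has no factor of degree $k$ in $\mathbb{Q}[x]$. (ii) Let $p\ge k+2$ be a prime satisfying (C). Put $r_p=\lfloor k/2\rfloor$ if $p<2k$ and $r_p=p-1$ if $p\ge 2k$, and $\mathcal{A}_p=\bigcup_{i=1}^{r_p}\big([ip-k,\,ip-1]\cap\mathbb{Z}_{>0}\big)\cup\{j\in\mathbb{Z}: j>pr_p\}$. If $a\notin\mathcal{A}_p$, then $f_{n,a}(x)$ has no factor of degree $k$ in $\mathbb{Q}[x]$. (iii) Let $P_1>P_2>\cdots>P_s\ge k+2$ be primes satisfying (C), and let $\{Q_1,\dots,Q_g\}\subseteq\{P_1,\dots,P_s\}$. Put $\mathcal{B}\{Q_1,\dots,Q_g\}=\bigcap_{l=1}^{g}\mathcal{A}_{Q_l}$ with $\mathcal{A}_{Q_l}$ as in (ii). If $a\notin\mathcal{B}\{Q_1,\dots,Q_g\}$, then $f_{n,a}(x)$ has no factor of degree $k$ in $\mathbb{Q}[x]$.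
   Context: Here $a$ is an integer. For integers $n\ge 1$, $a\ge 0$ and integers $a_0,\dots,a_n$, $f_{n,a}(x)=\sum_{j=0}^{n} a_j\frac{x^j}{(j+a)!}$. *)

(* Defs.v *)
From HB Require Import structures.
From mathcomp Require Import all_boot all_order all_algebra.
Set Implicit Arguments. Unset Strict Implicit. Unset Printing Implicit Defensive.
Import Order.TTheory GRing.Theory Num.Theory.

Definition fna (n a : nat) (c : nat -> int) : {poly rat} :=
  (\sum_(j < n.+1) ((c j)%:~R / ((j + a)`!)%:R) *: 'X^j)%R.

Definition no_factor_of_degree (k : nat) (f : {poly rat}) : Prop :=
  ~ exists g : {poly rat}, size g = k.+1 /\ (g %| f)%R.

Definition condC (n a k : nat) (c : nat -> int) (p : nat) : bool :=
  [&& prime p,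
      p %| \prod_(1 <= i < k.+1) (a + n - k + i)
    & ~~ ((p%:Z %| (c 0%N * c n)%R)%Z)].

Definition r_p (k p : nat) : nat := if p < k.*2 then k./2 else p.-1.

Definition inA (k p a : nat) : bool :=
  has (fun i => (i * p - k <= a) && (a <= i * p - 1)) (iota 1 (r_p k p))
  || (p * r_p k p < a).

Definition inB (k : nat) (Qs : seq nat) (a : nat) : bool :=
  all (fun q => inA k q a) Qs.

(* Main.v *)
Require Import Defs.
From HB Require Import structures.
From mathcomp Require Import all_boot all_order all_algebra.
From mathcomp Require Import zify ring lra.
Set Implicit Arguments. Unset Strict Implicit. Unset Printing Implicit Defensive.
Import Order.TTheory GRing.Theory Num.Theory.

Lemma logn_fact_rec p N : prime p ->
  logn p N`! = N %/ p + logn p (N %/ p)`!.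
Proof.
move=> pp; have p0 := prime_gt0 pp.
elim: N => [|N IH]; first by rewrite div0n.
rewrite factS lognM ?fact_gt0 // IH divnS //.
case: (boolP (p %| N.+1)) => hd /=.
- have [m Hm] : exists m, N.+1 = m * p by exists (N.+1 %/ p); rewrite divnK.
  have -> : N %/ p = m.-1.
    have m0 : 0 < m by case: m Hm => //.
    apply/eqP; rewrite eqn_leq; apply/andP; split.
      by rewrite -ltnS prednK // ltn_divLR // -Hm.
    by rewrite leq_divRL // -ltnS Hm ltn_mul2r p0 /=; lia.
  have m0 : 0 < m by case: m Hm => //.
  case: m m0 Hm => // m' _ Hm /=.
  rewrite add1n factS lognM ?fact_gt0 // Hm lognM // (logn_prime p pp) eqxx /=; move: (logn p m'.+1) (logn p m'`!) => x y; lia.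
- rewrite !add0n logn_coprime //.
  by rewrite prime_coprime.
Qed.

Lemma logn_fact_small p M : prime p -> M < p -> logn p M`! = 0.
Proof.
move=> pp hM; by rewrite logn_fact_rec // divn_small // fact0 logn1.
Qed.

Lemma logn_fact_bound p M : prime p -> (p.-1) * logn p M`! <= M.
Proof.
move=> pp; have p1 := prime_gt1 pp.
elim: M {-2}M (leqnn M) => [|B IH] M hM.
  by move: hM; rewrite leqn0 => /eqP ->; rewrite fact0 logn1 muln0.
case: M hM => [|M] hM; first by rewrite fact0 logn1 muln0.
rewrite logn_fact_rec // mulnDr.
have h1 : M.+1 %/ p <= B.
  have h2 : M.+1 %/ p < M.+1 by rewrite ltn_Pdiv.
  lia.
have := IH _ h1.
have := leq_divM M.+1 p.
move: (M.+1 %/ p) => x; move: (logn p x`!) => y.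
nia.
Qed.
Lemma coreA (p k q s r M V R : nat) :
  1 <= k -> k.+2 <= p -> M * p <= q * p + s + R -> q <= M ->
  p.-1 * V <= M -> (M < p -> V = 0) -> s + k < p -> q <= r -> (q = r -> s = 0) ->
  0 < R -> p < k.*2 -> r.*2 <= k -> k * (M + V - q) < R.
Proof.
move=> hk hp h1 h2 h3 h4 h5 h6 h7 hR hpk hr.
case: (ltnP M p) => hM.
  rewrite h4 // addn0.
  nia.
nia.
Qed.
Lemma coreB (p k q s r M V R : nat) :
  1 <= k -> k.+2 <= p -> M * p <= q * p + s + R -> q <= M ->
  p.-1 * V <= M -> (M < p -> V = 0) -> s + k < p -> q <= r -> (q = r -> s = 0) ->
  0 < R -> k.*2 < p -> r = p.-1 -> k * (M + V - q) < R.
Proof.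
move=> hk hp h1 h2 h3 h4 h5 h6 h7 hR hpk hr.
case: (ltnP M p) => hM.
  rewrite h4 // addn0.
  nia.
nia.
Qed.

Lemma numeric (a k p R : nat) : prime p -> 1 <= k -> k.+2 <= p -> ~~ inA k p a ->
  0 < R -> k * (logn p (a + R)`! - logn p a`!) < R.
Proof.
move=> pp hk hp hA hR.
have p0 := prime_gt0 pp.
set q := a %/ p; set s := a %% p.
have ha : a = q * p + s by rewrite /q /s -divn_eq.
have hs : s < p by rewrite ltn_pmod.
move: hA; rewrite /inA negb_or => /andP [/hasPn H1 H2].
rewrite -leqNgt in H2.
set r := r_p k p in H1 H2.
have hrp : r < p.
  rewrite /r /r_p; case: ifP => _; last by lia.
  have := leq_trunc_div k 2.  lia.
have hqr : q <= r by nia.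
have h5 : s + k < p.
  rewrite ltnNge; apply/negP => hc.
  have hqr' : q < r by nia.
  have := H1 q.+1; rewrite mem_iota => /(_ ltac:(lia)).
  move/negP; apply; apply/andP; split; nia.
have h7 : q = r -> s = 0 by move=> e; nia.
have hq : logn p a`! = q.
  by rewrite logn_fact_rec // (logn_fact_small pp) ?addn0 //; rewrite -/q; lia.
rewrite hq logn_fact_rec //.
have h1 : (a + R) %/ p * p <= q * p + s + R by rewrite -ha leq_divM.
have h2 : q <= (a + R) %/ p by rewrite /q leq_div2r // leq_addr.
have h3 := logn_fact_bound ((a + R) %/ p) pp.
have h4 : (a + R) %/ p < p -> logn p ((a + R) %/ p)`! = 0 by apply: logn_fact_small.
case: (ltnP p k.*2) => hpk.
  apply: (coreA hk hp h1 h2 h3 h4 h5 hqr h7 hR hpk).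
  move: hpk; rewrite /r /r_p => ->.
  by rewrite -{2}(odd_double_half k); lia.
have hpk' : k.*2 < p.
  rewrite ltn_neqAle hpk andbT; apply/negP => /eqP e.
  have : 2 %| p by rewrite -e dvdn2 odd_double.
  by rewrite dvdn_prime2 //; lia.
apply: (coreB hk hp h1 h2 h3 h4 h5 hqr h7 hR hpk').
by rewrite /r /r_p ltnNge hpk.
Qed.

Definition Pr (u w : nat) : nat := \prod_(u.+1 <= i < w.+1) i.

Lemma fact_split u w : u <= w -> w`! = u`! * Pr u w.
Proof.
move=> h; rewrite /Pr !fact_prod -big_cat_nat //.
Qed.

Lemma Pr_gt0 u w : 0 < Pr u w.
Proof. rewrite /Pr big_seq_cond prodn_cond_gt0 // => i; rewrite mem_index_iota; lia. Qed.

Lemma Pr_cat u v w : u <= v -> v <= w -> Pr u w = Pr u v * Pr v w.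
Proof. move=> h1 h2; rewrite /Pr -big_cat_nat //. Qed.

Lemma Pr_shift A k : \prod_(1 <= i < k.+1) (A + i) = Pr A (A + k).
Proof.
elim: k => [|k IH]; first by rewrite /Pr addn0 !big_geq.
rewrite big_nat_recr //= IH /Pr -addnS [in RHS]big_nat_recr //= ?addnS //; lia.
Qed.

Definition Fint (n a : nat) (c : nat -> int) : {poly int} :=
  \poly_(j < n.+1) (c j * (Pr (j + a) (n + a))%:Z)%R.

Local Notation pZtoQ := (map_poly (intr : int -> rat)).

Lemma fna_Fint n a c : pZtoQ (Fint n a c) = (((n + a)`!)%:R *: fna n a c)%R.
Proof.
apply/polyP => i.
rewrite coef_map coefZ /fna -(poly_def n.+1 (fun j => (c j)%:~R / ((j + a)`!)%:R)%R) !coef_poly /=.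
case: ifP => hi; last by rewrite mulr0.
have hf : i + a <= n + a by rewrite leq_add2r -ltnS.
rewrite (fact_split hf) natrM intrM.
have hne : (((i + a)`!)%:R != 0 :> rat)%R by rewrite pnatr_eq0 -lt0n fact_gt0.
rewrite -pmulrn; field => //.
Qed.

Lemma pick_max (f : nat -> rat) (P : pred nat) K :
  (exists i0, P i0 /\ i0 < K) ->
  exists d, [/\ P d, d < K, (forall i, i < K -> P i -> (f i <= f d)%R) &
                 (forall i, i < K -> P i -> d < i -> (f i < f d)%R)].
Proof.
elim: K => [|K IH] [i0 [Pi0 hi0]]; first by [].
case: (boolP (has P (iota 0 K))) => hh.
  have [j [Pj hj]] : exists j, P j /\ j < K.
    by move/hasP: hh => [j]; rewrite mem_iota => hj Pj; exists j; split => //; lia.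
  have [d [Pd hd H1 H2]] := IH (ex_intro _ j (conj Pj hj)).
  case: (boolP (P K && (f d <= f K)%R)) => /andP hK.
    case: hK => PK hK.
    exists K; split => // i hi Pi.
      have [hiK|hiK|hiK] := ltngtP i K; [exact: le_trans (H1 _ hiK Pi) hK | lia | by rewrite hiK lexx].
    lia.
  exists d; split => //; first lia.
    move=> i hi Pi; have [hiK|hiK|hiK] := ltngtP i K; [exact: H1 | lia | ].
    subst i; case: (leP (f d) (f K)) => hlt; [by exfalso; apply: hK | exact: ltW].
  move=> i hi Pi hdi; have [hiK|hiK|hiK] := ltngtP i K; [exact: H2 | lia | ].
  subst i; case: (leP (f d) (f K)) => hlt //; by exfalso; apply: hK.
have Pn : i0 = K.
  case: (ltngtP i0 K) => // h; last lia.
  by move/hasPn: hh => /(_ i0); rewrite mem_iota Pi0 => /(_ ltac:(lia)).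
subst i0; exists K; split => // i hi Pi.
  have [hiK|hiK|hiK] := ltngtP i K; [|lia|by rewrite hiK lexx].
  by move/hasPn: hh => /(_ i); rewrite mem_iota Pi => /(_ ltac:(lia)).
lia.
Qed.

Local Open Scope ring_scope.

Lemma dvd_abs_add (d : nat) (x y : int) : (d %| `|x|)%N -> (d %| `|y|)%N -> (d %| `|(x + y)%R|)%N.
Proof. move=> hx hy; have : (d%:Z %| x + y)%Z by apply: rpredD. by []. Qed.

Lemma dvd_abs_sub (d : nat) (x y : int) : (d %| `|(x + y)%R|)%N -> (d %| `|y|)%N -> (d %| `|x|)%N.
Proof.
move=> hx hy; have : (d%:Z %| (x + y) - y)%Z by apply: rpredB.
by rewrite addrK.
Qed.

Lemma pv_dvd (p : nat) (x : int) : (p ^ logn p `|x| %| `|x|)%N.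
Proof. exact: pfactor_dvdnn. Qed.

Lemma ultra (p V : nat) (t u : int) : prime p -> t != 0 -> logn p `|t| = V ->
  (p ^ V.+1 %| `|u|)%N -> t + u != 0 /\ logn p `|(t + u)%R| = V.
Proof.
move=> pp t0 vt hu.
have hV : (p ^ V %| `|(t + u)%R|)%N.
  apply: dvd_abs_add; first by rewrite -vt pv_dvd.
  by apply: dvdn_trans hu; rewrite dvdn_exp2l.
have hV1 : ~~ (p ^ V.+1 %| `|(t + u)%R|)%N.
  apply/negP => h; have := dvd_abs_sub h hu.
  by rewrite pfactor_dvdn // ?absz_gt0 // vt ltnn.
have tu0 : t + u != 0 by apply/negP => /eqP e; move: hV1; rewrite e dvdn0.
split => //.
move: hV hV1; rewrite !pfactor_dvdn ?absz_gt0 //; lia.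
Qed.

Lemma core (n a k p : nat) (c : nat -> int) (G H : {poly int}) :
  prime p -> (1 <= k)%N -> (k.*2 <= n)%N -> (k.+2 <= p)%N ->
  condC n a k c p -> size G = k.+1 -> Fint n a c = G * H ->
  exists R, [/\ (1 <= R)%N, (R <= n)%N &
     (R <= k * (logn p (a + R)`! - logn p a`!))%N].
Proof.
move=> pp hk hkn hkp hC hG hF.
have p1 := prime_gt1 pp.
have hkn2 : (k + k <= n)%N by rewrite addnn.
clear hkn.
set v := fun x : int => logn p `|x|%N.
set dv := fun x : int => (p %| `|x|%N)%N.
set m := (n - k)%N.
have hB : forall j, (j <= n)%N -> (G * H)`_j = c j * (Pr (j + a) (n + a))%:Z.
  by move=> j hj; rewrite -hF coef_poly ltnS hj.
move: hC; rewrite /condC => /and3P [_ hprod hc].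
have hc' : ~~ (p %| `|c 0%N|%N * `|c n|%N)%N by rewrite -abszM.
rewrite Euclid_dvdM // negb_or in hc'.
case/andP: hc' => hc0 hcn.
have c00 : c 0%N != 0 by apply/negP => /eqP e; move: hc0; rewrite e dvdn0.
have cn0 : c n != 0 by apply/negP => /eqP e; move: hcn; rewrite e dvdn0.
have hPr : forall j, (j <= m)%N -> (p %| Pr (j + a) (n + a))%N.
  move=> j hj.
  rewrite (@Pr_cat _ (m + a)); try lia.
  apply: dvdn_mull.
  move: hprod; rewrite Pr_shift.
  have -> : (a + n - k + k = n + a)%N by lia.
  by have -> : (a + n - k = m + a)%N by rewrite /m; lia.
have sF : size (Fint n a c) = n.+1.
  rewrite size_poly_eq //= /Pr big_geq // mulr1 //.
have G0 : G != 0 by rewrite -size_poly_eq0 hG.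
have H0 : H != 0 by apply/negP => /eqP e; move: sF; rewrite hF e mulr0 size_poly0.
have sH : size H = m.+1.
  move: sF; rewrite hF size_mul // hG addSn /= => e; rewrite /m. clear -e hkn2; move: (size H) e => s e; lia.
have hlead : G`_k * H`_m = c n.
  have := lead_coefM G H; rewrite !lead_coefE -hF sF hG sH /= => <-.
  by rewrite hF hB // /Pr big_geq // mulr1.
have hGk : ~~ dv G`_k /\ ~~ dv H`_m.
  move: hcn; rewrite -hlead abszM Euclid_dvdM // negb_or => /andP [h1 h2]; by split.
case: hGk => hGk hHm.
have hb0 : G`_0 * H`_0 = c 0%N * (Pr a (n + a))%:Z.
  by rewrite -coef0M hB.
have PrZ : forall u w, (Pr u w)%:Z != 0.
  by move=> u w; rewrite -[0]/(0%:Z) eqz_nat -lt0n Pr_gt0.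
have : G`_0 * H`_0 != 0 by rewrite hb0 mulf_neq0.
rewrite mulf_eq0 negb_or => /andP [G00 H00].
have dG0 : dv G`_0.
  apply/negPn/negP => nG0.
  have exH : exists j, ~~ dv H`_j by exists m.
  pose h0 := ex_minn exH.
  have [Hh0 h0min] : ~~ dv H`_h0 /\ forall j, ~~ dv H`_j -> (h0 <= j)%N.
    by rewrite /h0; case: ex_minnP.
  have h0m : (h0 <= m)%N by apply: h0min.
  have hd : dv ((G * H)`_h0) by rewrite /dv hB ?abszM ?dvdn_mull ?hPr //; exact: leq_trans h0m (leq_subr k n).
  move: hd; rewrite coefM big_ord_recl subn0 /dv => hd.
  have hrest : (p %| `|(\sum_(i < h0) G`_(lift ord0 i) * H`_((h0 - lift ord0 i)%N))%R|%N)%N.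
    have : (p%:Z %| \sum_(i < h0) G`_(lift ord0 i) * H`_((h0 - lift ord0 i)%N))%Z.
      apply: rpred_sum => i _.
      have : dv H`_((h0 - lift ord0 i)%N).
        apply/negPn/negP => hn; have := h0min _ hn.
        rewrite lift0 /=; move: (ltn_ord i); clear; move: (nat_of_ord i) => x; lia.
      by move=> hH; apply: dvdz_mull; exact: hH.
    by [].
  have := dvd_abs_sub hd hrest.
  rewrite abszM Euclid_dvdM // => /orP [h|h]; [by move: nG0; rewrite /dv h | by move: Hh0; rewrite /dv h].
have v0 : forall x : int, ~~ dv x -> v x = 0%N.
  by move=> x hx; rewrite /v logn_coprime // prime_coprime.
have exG : exists i, ~~ dv G`_i by exists k.
pose i0 := ex_minn exG.
have [Gi0 i0min] : ~~ dv G`_i0 /\ forall j, ~~ dv G`_j -> (i0 <= j)%N.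
  by rewrite /i0; case: ex_minnP.
have i0k : (i0 <= k)%N by apply: i0min.
have i0pos : (0 < i0)%N.
  by rewrite lt0n; apply/negP => /eqP e; move: Gi0; rewrite e dG0.
pose vG := fun i => v G`_i.
pose vH := fun i => v H`_i.
have vG0 : (1 <= vG 0)%N.
  rewrite /vG /v logn_gt0 mem_primes pp absz_gt0 G00 /=; exact: dG0.
have Gi00 : G`_i0 != 0 by apply/negP => /eqP e; move: Gi0; rewrite e /dv dvdn0.
pose ratio := fun i : nat => (((v G`_0)%:R - (v G`_i)%:R) / i%:R : rat).
pose PG := fun i : nat => (0 < i)%N && (G`_i != 0).
have [d1 [Pd1 hd1 Hd1 _]] := @pick_max ratio PG k.+1 (ex_intro _ i0 (conj (introT andP (conj i0pos Gi00)) (i0k : (i0 < k.+1)%N))).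
pose lam := ratio d1.
have [d [Pd hd Hdmax _]] := @pick_max (fun i => i%:R) (fun i => PG i && (ratio i == lam)) k.+1
   (ex_intro _ d1 (conj (introT andP (conj Pd1 (eqxx lam))) hd1)).
case/andP: Pd => /andP [dpos Gd0] /eqP Rd.
have Rle : forall i, (i <= k)%N -> PG i -> ratio i <= lam by move=> i hi; apply: Hd1.
have Rlt : forall i, (i <= k)%N -> PG i -> (d < i)%N -> ratio i < lam.
  move=> i hi Pi hdi; rewrite lt_def Rle // andbT.
  apply/negP => /eqP e.
  by have := Hdmax i hi; rewrite Pi e eqxx => /(_ isT); rewrite ler_nat leqNgt hdi.
pose wG := fun i : nat => (v G`_i)%:R + lam * i%:R.
have GA : forall i, (i <= k)%N -> G`_i != 0 -> (v G`_0)%:R <= wG i.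
  move=> i hi Gi; case: (posnP i) => [->|ip]; first by rewrite /wG mulr0 addr0.
  have := Rle i hi (introT andP (conj ip Gi)).
  rewrite /ratio ler_pdivrMr ?ltr0n // /wG; lra.
have GB : forall i, (i <= k)%N -> G`_i != 0 -> (d < i)%N -> (v G`_0)%:R < wG i.
  move=> i hi Gi hdi.
  have ip : (0 < i)%N by apply: leq_ltn_trans hdi.
  have := Rlt i hi (introT andP (conj ip Gi)) hdi.
  rewrite /ratio ltr_pdivrMr ?ltr0n // /wG; lra.
have GC : (v G`_0)%:R = wG d.
  have dn0 : (d%:R : rat) != 0 by rewrite pnatr_eq0 -lt0n.
  move: Rd; rewrite /ratio /wG => e.
  have : ((v G`_0)%:R - (v G`_d)%:R : rat) = lam * d%:R by rewrite -e divfK.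
  lra.
have Glam : 1 <= lam * k%:R.
  have := Rle i0 i0k (introT andP (conj i0pos Gi00)).
  rewrite /ratio (v0 _ Gi0) subr0 ler_pdivrMr ?ltr0n // => h.
  have h1 : 1 <= lam * i0%:R.
    apply: le_trans h; rewrite ler1n; exact: vG0.
  apply: (le_trans h1); rewrite ler_wpM2l ?ler_nat //.
  have : (0 < lam * i0%:R) by apply: lt_le_trans h1.
  by rewrite pmulr_lgt0 ?ltr0n // => /ltW.
have Hm0 : H`_m != 0 by apply/negP => /eqP e; move: hHm; rewrite e /dv dvdn0.
pose wH := fun j : nat => (v H`_j)%:R + lam * j%:R.
have [L [HL0 hL HA HB]] := @pick_max (fun j => - wH j) (fun j => H`_j != 0) m.+1
   (ex_intro _ m (conj Hm0 (ltnSn m))).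
have HA' : forall j, (j <= m)%N -> H`_j != 0 -> wH L <= wH j.
  by move=> j hj Hj; have := HA j hj Hj; rewrite lerN2.
have HB' : forall j, (j <= m)%N -> H`_j != 0 -> (L < j)%N -> wH L < wH j.
  by move=> j hj Hj hLj; have := HB j hj Hj hLj; rewrite ltrN2.
clear HA HB Hdmax Hd1.
have Gbig : forall i, (k < i)%N -> G`_i = 0.
  move=> i hi; have /leq_sizeP h : (size G <= k.+1)%N by rewrite hG.
  exact: h.
have Hbig : forall j, (m < j)%N -> H`_j = 0.
  move=> j hj; have /leq_sizeP h : (size H <= m.+1)%N by rewrite sH.
  exact: h.
pose R := (d + L)%N.
have hdR : (d < R.+1)%N by rewrite /R ltnS leq_addr.
pose V := (vG d + vH L)%N.
have hvt : v (G`_d * H`_L) = V.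
  by rewrite /v abszM lognM ?absz_gt0.
have hrestR : (p ^ V.+1 %| `|(\sum_(i < R.+1 | i != Ordinal hdR) G`_i * H`_((R - i)%N))%R|%N)%N.
  have : ((p ^ V.+1)%:Z %| \sum_(i < R.+1 | i != Ordinal hdR) G`_i * H`_((R - i)%N))%Z.
    apply: rpred_sum => i hi.
    have hid : (nat_of_ord i != d) by move: hi; apply: contra => /eqP e; apply/eqP/val_inj.
    case: (boolP (G`_i == 0)) => [/eqP ->|Gi]; first by rewrite mul0r dvdz0.
    case: (boolP (H`_((R - i)%N) == 0)) => [/eqP ->|Hi]; first by rewrite mulr0 dvdz0.
    have ik : (i <= k)%N by rewrite leqNgt; apply/negP => /Gbig; apply/eqP.
    have ikm : ((R - i) <= m)%N by rewrite leqNgt; apply/negP => /Hbig; apply/eqP.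
    have iR : (i <= R)%N by rewrite -ltnS.
    have wsum : lam * i%:R + lam * (R - i)%:R = lam * d%:R + lam * L%:R.
      by rewrite -!mulrDr -!natrD subnKC.
    have hlt : (V.+1 <= vG i + vH (R - i))%N.
      rewrite -(ltr_nat rat) !natrD.
      have [hdi|hdi] : (d < i)%N \/ (i < d)%N by move: hid; rewrite neq_ltn => /orP [h|h]; [right|left].
        have := GB i ik Gi hdi; have := HA' _ ikm Hi; have := GC.
        rewrite /wG /wH /vG /vH; lra.
      have hLi : (L < R - i)%N by rewrite /R; move: (nat_of_ord i) hdi; clear; move=> x hx; lia.
      have := GA i ik Gi; have := HB' _ ikm Hi hLi; have := GC.
      rewrite /wG /wH /vG /vH; lra.
    rewrite dvdzE /= abszM; apply: dvdn_trans (_ : p ^ (vG i + vH (R - i)) %| _)%N.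
      by rewrite dvdn_exp2l.
    by rewrite expnD dvdn_mul // pv_dvd.
  by [].
have [BR0 vBR] := ultra pp (mulf_neq0 Gd0 HL0) hvt hrestR.
have eBR : (G * H)`_R = G`_d * H`_L + \sum_(i < R.+1 | i != Ordinal hdR) G`_i * H`_((R - i)%N).
  by rewrite coefM (bigD1 (Ordinal hdR)) //= /R addKn.
rewrite -eBR in BR0 vBR.
have hRn : (R <= n)%N.
  rewrite /R; move: hd hL hkn2; rewrite /m; clear; move=> h1 h2 h3; lia.
have vB0 : logn p `|((G * H)`_0)%R|%N = (vG 0 + vH 0)%N.
  by rewrite coef0M abszM lognM ?absz_gt0.
have key : (V%:R + lam * R%:R <= (vG 0 + vH 0)%:R :> rat).
  have := HA' 0%N (leq0n _) H00; have := GC.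
  rewrite /wG /wH /vG /vH /V /R !natrD mulrDr mulr0; lra.
have key2 : ((k * V + R)%:R <= (k * (vG 0 + vH 0))%:R :> rat).
  rewrite natrD !natrM.
  have h1 : R%:R <= k%:R * (lam * R%:R) :> rat.
    rewrite mulrA [k%:R * lam]mulrC -{1}[R%:R]mul1r ler_wpM2r // ?ler0n //.
  have h2 : k%:R * (V%:R + lam * R%:R) <= k%:R * (vG 0 + vH 0)%:R :> rat.
    by rewrite ler_wpM2l ?ler0n.
  move: h1 h2; rewrite mulrDr; lra.
rewrite ler_nat in key2.
exists R; split => //; first by rewrite /R addn_gt0 dpos.
move: vB0 vBR; rewrite coef0M hb0 hB // !abszM /= !lognM ?absz_gt0 ?Pr_gt0 //; last first.
  by move: BR0; rewrite hB // mulf_eq0 negb_or => /andP [].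
have := v0 _ hc0; rewrite /v => ->; rewrite add0n.
rewrite (@Pr_cat a (R + a) (n + a)) ?leq_addl ?leq_add2r // lognM ?Pr_gt0 //.
have hf := fact_split (leq_addl R a).
rewrite [(a + R)%N]addnC hf lognM ?fact_gt0 ?Pr_gt0 // addKn.
move=> e1 e2; move: key2; rewrite -e1 -e2.
move: (logn p (Pr a (R + a))) (logn p (Pr (R + a) (n + a))) (logn p `|c R|) => X Y Z.
clear; move=> h; nia.
Qed.

Lemma part2 (a n k : nat) (c : nat -> int) (p : nat) :
  (1 <= k)%N -> (k.*2 <= n)%N -> (k.+2 <= p)%N -> condC n a k c p -> ~~ inA k p a ->
  no_factor_of_degree k (fna n a c).
Proof.
move=> hk hkn hkp hC hA [g [sg hdiv]].
have pp : prime p by case/and3P: hC.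
have : g %| map_poly (intr : int -> rat) (Fint n a c).
  by rewrite fna_Fint dvdpZr // pnatr_eq0 -lt0n fact_gt0.
case/dvdpP_rat_int => G [al al0 gE] [H hFGH].
have sG : size G = k.+1 by rewrite -sg gE size_scale // size_rat_int_poly.
have [R [hR1 hRn hRk]] := core pp hk hkn hkp hC sG hFGH.
have := numeric pp hk hkp hA hR1.
by rewrite ltnNge hRk.
Qed.

Local Close Scope ring_scope.

Theorem corollary2p2 (a n k : nat) (c : nat -> int) :
  0 < a -> 1 <= k -> k.*2 <= n ->
  (* (i) *)
  ((exists p, a + k < p /\ condC n a k c p) ->
     no_factor_of_degree k (fna n a c)) /\
  (* (ii) *)
  (forall p, k.+2 <= p -> condC n a k c p -> ~~ inA k p a ->
     no_factor_of_degree k (fna n a c)) /\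
  (* (iii) *)
  (forall Ps Qs : seq nat,
     sorted (fun x y => y < x) Ps ->
     all (fun q => (k.+2 <= q) && condC n a k c q) Ps ->
     {subset Qs <= Ps} ->
     ~~ inB k Qs a ->
     no_factor_of_degree k (fna n a c)).
Proof.
move=> ha hk hkn; split; [|split].
- move=> [p [hp hC]].
  have hkp : k.+2 <= p by lia.
  apply: (part2 hk hkn hkp hC).
  rewrite /inA negb_or; apply/andP; split.
    apply/hasPn => i; rewrite mem_iota => /andP [h1 h2]; apply/negP => /andP [h3 h4].
    move: h1 h3 hp; clear; move=> h1 h3 hp; nia.
  rewrite -leqNgt /r_p; case: ifP => hpk.
    have h2 : 1 <= k./2.
      have := odd_double_half k; move: hpk hkp; clear; move=> h1 h2; case: (odd k) => /=; lia.
    move: h2 hp; move: (k./2) => r; clear; move=> h1 h2; nia.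
  move: hp hkp; clear; move=> h1 h2; nia.
- move=> p hkp hC hA; exact: (part2 hk hkn hkp hC hA).
- move=> Ps Qs _ hall hsub /allPn [q hq hA].
  have /andP [hkq hC] := allP hall q (hsub q hq).
  exact: (part2 hk hkn hkq hC hA).
Qed.
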